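(* For every positive integer $k$ there exists a finite-dimensional real $k$-step nilpotent Lie algebra carrying an abelian hypercomplex structure. Concretely, if $A$ is the complex commutative algebra of $(k+1)\times(k+1)$ complex upper triangular Toeplitz matrices with zero diagonal (matrices whose $(p,q)$ entry is $a_{q-p}$ for $q>p$ and $0$ otherwise, with $a_1,\dots,a_k\in\mathbb C$), then $\mathfrak{aff}(A)$ is $k$-step nilpotent and the structures $J(a,b)=(b,-a)$, $K(a,b)=(ia,-ib)$ form an abelian hypercomplex structure on it.
   Context: For a commutative associative algebra $A$ (viewed as a real algebra), $\mathfrak{aff}(A)$ is the real Lie algebra $A\oplus A$ with bracket $[(a,b),(a',b')]=(0,ab'-a'b)$. An abelian complex structure on a real Lie algebra is a linear map $J$ with $J^2=-\mathrm{Id}$ and $[Jx,Jy]=[x,y]$ for all $x,y$; an abelian hypercomplex structure is a pair of anticommuting abelian complex structures. A Lie algebra is $k$-step nilpotent if its lower central series $\mathfrak g^{1}=\mathfrak g$, $\mathfrak g^{j+1}=[\mathfrak g,\mathfrak g^j]$ satisfies $\mathfrak g^{k+1}=0\ne\mathfrak g^{k}$. *)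

(* Defs.v *)
From HB Require Import structures.
From mathcomp Require Import all_boot all_order all_algebra.
From mathcomp Require Import complex.
From mathcomp Require Import reals.
Set Implicit Arguments. Unset Strict Implicit. Unset Printing Implicit Defensive.
Import Order.TTheory GRing.Theory Num.Theory.
Local Open Scope ring_scope.
Local Open Scope complex_scope.

Section Aff.
Variable R : realType.
Local Notation C := (complex R).
Variable k : nat.

Definition Mat := 'M[C]_(k.+1).

Definition inA (M : Mat) : Prop :=
  exists a : nat -> C, forall p q : 'I_(k.+1),
    M p q = if (p < q)%N then a (q - p)%N else 0.

Definition V := (Mat * Mat)%type.

Definition aff (x : V) : Prop := inA x.1 /\ inA x.2.

Definition affbr (x y : V) : V := (0, x.1 *m y.2 - y.1 *m x.2).

Definition rscale (r : R) (x : V) : V := ((r%:C) *: x.1, (r%:C) *: x.2).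

Inductive rspan (S : V -> Prop) : V -> Prop :=
  | rspan0 : rspan S 0
  | rspan_in x : S x -> rspan S x
  | rspanD x y : rspan S x -> rspan S y -> rspan S (x + y)
  | rspanZ r x : rspan S x -> rspan S (rscale r x).

(* lcs j = g^(j+1) of the lower central series: g^1 = g,
   g^(j+1) = span [g, g^j] *)
Fixpoint lcs (j : nat) : V -> Prop :=
  match j with
  | O => aff
  | S m => rspan (fun z => exists x y, aff x /\ lcs m y /\ z = affbr x y)
  end.

Definition lower_central (j : nat) : V -> Prop := lcs j.-1.

Definition k_step_nilpotent (n : nat) : Prop :=
  (forall z, lower_central n.+1 z -> z = 0) /\
  (exists z, lower_central n z /\ z <> 0).

Definition abelian_complex_structure (J : V -> V) : Prop :=
  (forall x, aff x -> aff (J x)) /\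
  (forall x y, aff x -> aff y -> J (x + y) = J x + J y) /\
  (forall r x, aff x -> J (rscale r x) = rscale r (J x)) /\
  (forall x, aff x -> J (J x) = - x) /\
  (forall x y, aff x -> aff y -> affbr (J x) (J y) = affbr x y).

Definition abelian_hypercomplex_structure (J K : V -> V) : Prop :=
  abelian_complex_structure J /\ abelian_complex_structure K /\
  (forall x, aff x -> J (K x) = - K (J x)).

Definition Jst (x : V) : V := (x.2, - x.1).
Definition Kst (x : V) : V := ('i *: x.1, - ('i *: x.2)).

End Aff.

(* Main.v *)
Require Import Defs.
From HB Require Import structures.
From mathcomp Require Import all_boot all_order all_algebra.
From mathcomp Require Import complex reals.
From mathcomp Require Import zify.
Set Implicit Arguments. Unset Strict Implicit. Unset Printing Implicit Defensive.
Import Order.TTheory GRing.Theory Num.Theory.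
Local Open Scope ring_scope.

Section H.
Variable R : realType.
Local Notation C := (complex R).
Variable k : nat.
Local Notation M := 'M[C]_(k.+1).

Definition F (j : nat) : M := \matrix_(p, q) (((q : nat) == p + j)%N%:R).

Lemma sum_ind (f : 'I_k.+1 -> C) (m : nat) :
  \sum_(r < k.+1) ((r : nat) == m)%:R * f r =
  if (m < k.+1)%N then f (inord m) else 0.
Proof.
case: ltnP => hm.
  rewrite (bigD1 (Ordinal hm)) //= eqxx mul1r big1 ?addr0.
    by congr f; apply: val_inj; rewrite /= inordK.
  move=> r hr; case: eqP => h; last by rewrite mul0r.
  by case/eqP: hr; apply: val_inj.
apply: big1 => r _; case: eqP => h; last by rewrite mul0r.
by move: (ltn_ord r); rewrite h; lia.
Qed.

Lemma F1mul j : F 1 *m F j = F j.+1.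
Proof.
apply/matrixP => p q; rewrite !mxE.
under eq_bigr => r _ do rewrite !mxE.
rewrite (eq_bigr (fun r : 'I_k.+1 => ((r:nat) == p + 1)%N%:R * ((q:nat) == r + j)%N%:R)); last first.
  by move=> r _; rewrite eq_sym.
rewrite sum_ind; case: ltnP => h.
  by rewrite inordK //; congr (_%:R); apply/eqP/eqP; lia.
case: eqP => //; move: (ltn_ord q); lia.
Qed.

Lemma F1X j : F 1 ^+ j = F j.
Proof.
elim: j => [|j IH].
  by apply/matrixP => p q; rewrite expr0 !mxE addn0 eq_sym.
by rewrite exprS -mulmxE IH F1mul.
Qed.

Lemma inA_poly (A : M) : inA A -> exists P : {poly C}, A = horner_mx (F 1) P.
Proof.
case=> a ha.
pose c (j : nat) := if (0 < j)%N then a j else 0.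
exists (\sum_(j < k.+1) c j *: 'X^j).
rewrite linear_sum /=.
under eq_bigr => j _ do rewrite linearZ /= rmorphXn /= horner_mx_X F1X.
apply/matrixP => p q; rewrite ha summxE.
under eq_bigr => j _ do rewrite !mxE.
case: ltnP => hpq.
  have hj : (q - p < k.+1)%N by move: (ltn_ord q); lia.
  rewrite (bigD1 (Ordinal hj)) //= big1 ?addr0.
    rewrite /c /=; case: ifP => h0; last by exfalso; lia.
    case: eqP => h1; last by exfalso; lia.
    by rewrite mulr1.
  move=> j hj'; case: eqP => h; last by rewrite mulr0.
  by case/eqP: hj'; apply: val_inj => /=; lia.
rewrite big1 // => j _; rewrite /c; case: ifP => h; last by rewrite mul0r.
case: eqP => h'; last by rewrite mulr0.
lia.
Qed.

Lemma inA_comm (A B : M) : inA A -> inA B -> A *m B = B *m A.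
Proof.
move=> /inA_poly [P ->] /inA_poly [Q ->].
by rewrite mulmxE; apply: comm_horner_mx2.
Qed.


Definition Inv (m : nat) (z : V R k) := forall p q : 'I_k.+1,
  (q <= p + m)%N -> z.1 p q = 0 /\ z.2 p q = 0.

Lemma mul_supp (A B : M) a b (p q : 'I_k.+1) :
  (forall p r : 'I_k.+1, (r <= p + a)%N -> A p r = 0) ->
  (forall r q : 'I_k.+1, (q <= r + b)%N -> B r q = 0) ->
  (q <= p + a + b + 1)%N -> (A *m B) p q = 0.
Proof.
move=> hA hB hq; rewrite mxE big1 // => r _.
case: (leqP r (p + a)) => h; first by rewrite hA ?mul0r.
by rewrite hB ?mulr0 //; lia.
Qed.

Lemma aff_inv z : aff z -> Inv 0 z.
Proof.
case=> [[a ha] [b hb]] p q h; rewrite ha hb.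
have -> : (p < q)%N = false by lia.
by [].
Qed.

Lemma lcs_inv m z : lcs m z -> Inv m z.
Proof.
elim: m z => [|m IH] z /=; first exact: aff_inv.
elim => [|x [x1 [y [hx [hy ->]]]]|x y _ IHx _ IHy|r x _ IHx] p q h /=.
- by rewrite !mxE.
- have hx0 := aff_inv hx; have hy0 := IH _ hy.
  split; first by rewrite mxE.
  have e1 : (x1.1 *m y.2) p q = 0.
    apply: (mul_supp (a:=0) (b:=m)).
    + move=> p' r hr; by case: (hx0 p' r hr).
    + by move=> r q' hr; case: (hy0 r q' hr).
    + by rewrite addn0; lia.
  have e2 : (y.1 *m x1.2) p q = 0.
    apply: (mul_supp (a:=m) (b:=0)).
    + by move=> p' r hr; case: (hy0 p' r hr).
    + move=> r q' hr; by case: (hx0 r q' hr).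
    + by lia.
  by rewrite !mxE in e1 e2 *; rewrite e1 e2 subrr.
- have [h1 h2] := IHx p q ltac:(lia); have [h3 h4] := IHy p q ltac:(lia).
  by rewrite !mxE h1 h2 h3 h4 addr0.
- have [h1 h2] := IHx p q ltac:(lia).
  by rewrite !mxE h1 h2 mulr0.
Qed.

Definition E j : M := F j.+1.

Lemma lcs_E j : lcs j ((0 : M), E j).
Proof.
elim: j => [|j IH] /=.
  split; first by exists (fun _ => 0) => p q; rewrite mxE; case: ifP.
  exists (fun n => (n == 1)%N%:R) => p q; rewrite mxE.
  case: ifP => h; [congr (_%:R); apply/eqP/eqP; lia | case: eqP => // ?; exfalso; lia].
apply: rspan_in; exists (E 0, 0), ((0 : M), E j); split.
  split; last by exists (fun _ => 0) => p q; rewrite mxE; case: ifP.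
  exists (fun n => (n == 1)%N%:R) => p q; rewrite mxE.
  case: ifP => h; [congr (_%:R); apply/eqP/eqP; lia | case: eqP => // ?; exfalso; lia].
split => //.
by rewrite /affbr /= mul0mx subr0 /E F1mul.
Qed.

Lemma inAZ (c : C) (A : M) : inA A -> inA (c *: A).
Proof.
case=> a ha; exists (fun n => c * a n) => p q; rewrite mxE ha.
by case: ifP; rewrite ?mulr0.
Qed.

Lemma inAN (A : M) : inA A -> inA (- A).
Proof. by move=> h; rewrite -scaleN1r; apply: inAZ. Qed.

End H.

Theorem mainTheorem10 (R : realType) (k : nat) (hk : (0 < k)%N) :
  k_step_nilpotent R k k /\
  abelian_hypercomplex_structure (@Jst R k) (@Kst R k).
Proof.
split.
  split.
    move=> z /lcs_inv hz; case: z hz => z1 z2 hz.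
    have h : forall p q : 'I_k.+1, z1 p q = 0 /\ z2 p q = 0.
      by move=> p q; apply: hz; move: (ltn_ord q); lia.
    by congr pair; apply/matrixP => p q; rewrite mxE; case: (h p q).
  exists ((0 : 'M[R[i]]_k.+1), E R k k.-1); split; first exact: lcs_E.
  move=> /(congr1 (fun z : V R k => z.2 ord0 (@ord_max k))) /=; rewrite !mxE /=.
  by rewrite prednK // eqxx; apply/eqP; rewrite oner_eq0.
have i2 : ('i * 'i : R[i]) = -1 by rewrite -expr2 sqrCi.
split; last split.
- split; [|split; [|split; [|split]]].
  + by move=> x [h1 h2]; split => //=; apply: inAN.
  + by move=> x y _ _; rewrite /Jst /= opprD.
  + by move=> r x _; rewrite /Jst /rscale /= scalerN.
  + by move=> x _; rewrite /Jst /=; case: x.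
  + move=> x y [hx1 hx2] [hy1 hy2]; rewrite /affbr /Jst /=.
    by rewrite !mulmxN (inA_comm hx2 hy1) (inA_comm hx1 hy2) opprK addrC.
- split; [|split; [|split; [|split]]].
  + by move=> x [h1 h2]; split => /=; [apply: inAZ | apply/inAN/inAZ].
  + by move=> x y _ _; rewrite /Kst /= !scalerDr opprD.
  + by move=> r x _; rewrite /Kst /rscale /= scalerN !scalerA mulrC.
  + move=> [a b] _; rewrite /Kst /= scalerN opprK !scalerA i2 !scaleN1r. by [].
  + move=> x y _ _; rewrite /affbr /Kst /=.
    by rewrite !mulmxN -!scalemxAl -!scalemxAr !scalerA i2 !scaleN1r !opprK.
- by move=> [a b] _; rewrite /Jst /Kst /= !scalerN !opprK.
Qed.
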